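(* Let $n,m$ be positive integers, $\xi_m=e^{2\pi\sqrt{-1}/m}$, and $Q$ an integer valued positive definite quadratic form on $\mathbb{Z}^n$. Set \[ \Theta_{Q,m}(q)=\sum_{(k_1,\dots,k_n)\in\mathbb{Z}^n}q^{Q(k_1,\dots,k_n)}\xi_m^{k_1}. \] Suppose that $\Theta_{Q,m}(q)$ is unchanged when $\xi_m$ is replaced by $g(\xi_m)$, for every $g\in\mathrm{Gal}(\mathbb{Q}(\xi_m)/\mathbb{Q})$. Then $\Theta_{Q,m}(q)$ is a $\mathbb{Q}$-linear combination of theta series $\Theta_{Q'}(q)=\sum_{k\in\mathbb{Z}^n}q^{Q'(k)}$ of integer valued positive definite quadratic forms $Q'$ on $\mathbb{Z}^n$.
   Context: An integer valued positive definite quadratic form on $\mathbb{Z}^n$ is a quadratic form taking integer values on $\mathbb{Z}^n$ and positive definite over $\mathbb{R}$. The series are formal power series in $q$ with coefficients in $\mathbb{Q}(\xi_m)$, and $g$ acts on coefficients. *)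

(* Defs.v *)
From HB Require Import structures.
From mathcomp Require Import all_boot all_order all_algebra all_field.
From mathcomp Require Import boolp classical_sets fsbigop.
From mathcomp Require Import Rstruct.
From Stdlib Require Import Reals.
Set Implicit Arguments. Unset Strict Implicit. Unset Printing Implicit Defensive.
Import Order.TTheory GRing.Theory Num.Theory.
Local Open Scope ring_scope.
Local Open Scope classical_set_scope.

(* An integer valued quadratic form on Z^n, given by integer coefficients:
   Q(k) = sum_{i,j} A i j k_i k_j  (every integer valued form is of this shape,
   e.g. with A upper triangular). *)
Definition qf (n : nat) (A : 'M[int]_n) (k : 'rV[int]_n) : int :=
  \sum_(i < n) \sum_(j < n) A i j * k 0 i * k 0 j.

Definition posdef (n : nat) (A : 'M[int]_n) : Prop :=
  forall x : 'rV[Rdefinitions.R]_n, x != 0 ->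
    0 < \sum_(i < n) \sum_(j < n) (A i j)%:~R * x 0 i * x 0 j.

(* xi_m = e^{2 pi i / m}: m.-root (-1) is e^{i pi / m} (minimal argument root) *)
Definition xi (m : nat) : algC := (m.-root (-1)) ^+ 2.

(* N-th coefficient of sum_{k in Z^n} q^{Q(k)} z^{k_{i0}}
   (a finite sum when Q is positive definite). *)
Definition theta_coef (n : nat) (A : 'M[int]_n) (i0 : 'I_n) (z : algC) (N : nat)
  : algC :=
  \sum_(k \in [set k : 'rV[int]_n | qf A k = N%:Z]) z ^ (k 0 i0).

(* Main.v *)
Set Warnings "-notation-overridden,-ambiguous-paths,-deprecated".
Require Import Defs.
From HB Require Import structures.
From mathcomp Require Import all_boot all_order all_algebra all_field.
From mathcomp Require Import boolp classical_sets fsbigop.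
From mathcomp Require Import Rstruct cardinality.
From mathcomp Require Import ring lra zify.
Import Order.TTheory GRing.Theory Num.Theory.
Local Open Scope ring_scope.

Local Open Scope classical_set_scope.
Lemma box_finite (n M : nat) :
  finite_set [set k : 'rV[int]_n | forall i, `|k 0 i| < M%:Z].
Proof.
pose g (f : {ffun 'I_n -> 'I_(2 * M).+1}) : 'rV[int]_n :=
  \row_i ((f i : nat)%:Z - M%:Z).
apply: (sub_finite_set _ (finite_image g (@finite_finset _ [set: {ffun 'I_n -> 'I_(2 * M).+1}]))).
move=> k /= hk.
exists [ffun i => inord (absz (k 0 i + M%:Z))] => //.
apply/rowP => i; rewrite !mxE ffunE.
have h := hk i.
have h1 : 0 <= k 0 i + M%:Z by move: h; rewrite ltr_norml; lia.
rewrite inordK; last by move: h; rewrite ltr_norml; lia.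
rewrite gez0_abs //; lia.
Qed.

Section Fin.
Local Notation RR := Rdefinitions.R.
Variable (n : nat) (A : 'M[int]_n).

Definition qR (x : 'rV[RR]_n) : RR :=
  \sum_(i < n) \sum_(j < n) (A i j)%:~R * x 0 i * x 0 j.
Definition SR : 'M[RR]_n := \matrix_(i, j) ((A i j)%:~R + (A j i)%:~R).
Definition bf (u v : 'rV[RR]_n) : RR :=
  \sum_(i < n) \sum_(j < n) SR i j * u 0 i * v 0 j.

Lemma bf_linl a b (u u' v : 'rV[RR]_n) :
  bf (a *: u + b *: u') v = a * bf u v + b * bf u' v.
Proof.
rewrite /bf !mulr_sumr -big_split /=; apply: eq_bigr => i _.
rewrite !mulr_sumr -big_split /=; apply: eq_bigr => j _; rewrite !mxE /=; ring.
Qed.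

Lemma bf_sym u v : bf u v = bf v u.
Proof.
rewrite /bf exchange_big; apply: eq_bigr => i _; apply: eq_bigr => j _.
rewrite !mxE; ring.
Qed.

Lemma bf_qR x : bf x x = 2 * qR x.
Proof.
rewrite /bf /qR mulr2n mulrDl mul1r.
have E : \sum_(i < n) \sum_(j < n) (A i j)%:~R * x 0 i * x 0 j =
          \sum_(i < n) \sum_(j < n) (A j i)%:~R * x 0 i * x 0 j.
  by rewrite exchange_big; apply: eq_bigr => i _; apply: eq_bigr => j _; ring.
rewrite {2}E -big_split /=; apply: eq_bigr => i _; rewrite -big_split /=.
by apply: eq_bigr => j _; rewrite !mxE /=; ring.
Qed.

Lemma bf_mul w x : bf w x = \sum_(j < n) (w *m SR) 0 j * x 0 j.
Proof.
rewrite /bf exchange_big; apply: eq_bigr => j _.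
rewrite !mxE mulr_suml; apply: eq_bigr => i _; ring.
Qed.

Hypothesis hA : posdef A.

Lemma qR_ge0 x : 0 <= qR x.
Proof.
have [->|x0] := eqVneq x 0; last by apply/ltW/hA.
by rewrite /qR big1 // => i _; rewrite big1 // => j _; rewrite mxE mulr0 mul0r.
Qed.

Lemma SR_free : row_free SR.
Proof.
apply: inj_row_free => v vS; apply/eqP/negPn/negP => v0.
have := hA v v0; rewrite -/(qR v).
have : bf v v = 0 by rewrite bf_mul vS big1 // => j _; rewrite mxE mul0r.
rewrite bf_qR => /eqP; rewrite mulf_eq0 pnatr_eq0 /= => /eqP ->.
by rewrite ltxx.
Qed.

Lemma coord_bound (i : 'I_n) : exists a : RR, forall x : 'rV[RR]_n, x 0 i ^+ 2 <= a * qR x.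
Proof.
have [B SB] := row_freeP SR_free.
have BS := mulmx1C SB.
pose w := row i B.
have wS : w *m SR = row i 1%:M by rewrite /w -row_mul BS.
have bwx x : bf w x = x 0 i.
  rewrite bf_mul (bigD1 i) //= big1 ?addr0; first by rewrite wS !mxE eqxx mul1r.
  by move=> j /negbTE ji; rewrite wS !mxE eq_sym ji mul0r.
have w0 : w != 0.
  apply/eqP => w0; have := bwx (row i 1%:M); rewrite w0.
  rewrite /bf big1; first by rewrite !mxE eqxx => /eqP; rewrite eq_sym oner_eq0.
  by move=> j _; rewrite big1 // => k _; rewrite !mxE mulr0 mul0r.
have apos : 0 < bf w w by rewrite bf_qR mulr_gt0 //; apply: hA.
exists (2 * (bf w w)) => x.
pose a := bf w w; pose c := x 0 i.
pose y := a *: x + (- c) *: w.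
have hy : 0 <= bf y y by rewrite bf_qR mulr_ge0 // qR_ge0.
have e1 : bf w y = 0 by rewrite bf_sym bf_linl (bf_sym x) bwx -/a; rewrite /c; ring.
have e2 : bf y y = a * (a * bf x x - c ^+ 2).
  rewrite {1}/y bf_linl e1 bf_sym bf_linl bwx -/c; ring.
move: hy; rewrite e2 pmulr_rge0 // subr_ge0 bf_qR => h.
by move: h; rewrite /c /a mulrA (mulrC (bf w w)).
Qed.

Lemma qR_int (k : 'rV[int]_n) : qR (map_mx (fun z : int => z%:~R) k) = (qf A k)%:~R.
Proof.
rewrite /qR /qf rmorph_sum; apply: eq_bigr => i _; rewrite rmorph_sum.
by apply: eq_bigr => j _; rewrite !mxE !rmorphM.
Qed.

Lemma coord_bound_int (N : int) (i : 'I_n) : exists M : nat,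
  forall k : 'rV[int]_n, qf A k = N -> `|k 0 i| < M%:Z.
Proof.
have [a ha] := coord_bound i.
exists (Num.Def.archi_bound `|a * N%:~R|) => k hk.
have := ha (map_mx (fun z : int => z%:~R) k); rewrite qR_int hk mxE => h.
have h2 : (k 0 i ^+ 2)%:~R < (Num.Def.archi_bound `|a * N%:~R|)%:R :> RR.
  rewrite rmorphXn /=; apply: le_lt_trans h _; apply: le_lt_trans (ler_norm _) _.
  exact: archi_boundP.
have h3 : k 0 i ^+ 2 < (Num.Def.archi_bound `|a * N%:~R|)%:Z.
  by rewrite -(ltr_int RR).
apply: le_lt_trans h3; rewrite -real_normK ?num_real //.
have [->|k0] := eqVneq (k 0 i) 0; first by rewrite normr0.
by rewrite expr2 ler_peMr //; move: k0; lia.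
Qed.

Lemma qf_finite (N : int) : finite_set [set k : 'rV[int]_n | qf A k = N].
Proof.
have [f hf] := choice (coord_bound_int N).
apply: (sub_finite_set _ (box_finite n (\max_(i < n) f i))) => k /= hk i.
apply: lt_le_trans (hf i k hk) _; rewrite lez_nat.
exact: (leq_bigmax i).
Qed.
End Fin.
Lemma sum_mult (V : nmodType) (d e : nat) (F : nat -> V) : (0 < d)%N ->
  \sum_(0 <= r < e * d | (d %| r)%N) F r = \sum_(0 <= s < e) F (s * d)%N.
Proof.
move=> d0; elim: e => [|e IH]; first by rewrite mul0n !big_geq.
rewrite mulSn addnC (@big_cat_nat _ _ _ (e * d)) ?leq_addr //= IH.
rewrite big_nat_recr //=; congr (_ + _).
rewrite big_ltn_cond; last by lia.
have -> : (d %| e * d)%N by apply: dvdn_mull.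
rewrite big_nat_cond big1 ?addr0 // => r /andP[/andP[h1 h2] h3].
exfalso; have h : (d %| r - e * d)%N.
  by rewrite -(dvdn_addl _ (dvdn_mull e (dvdnn d))) subnK // ltnW.
have hp : (0 < r - e * d)%N by lia.
have := dvdn_leq hp h; lia.
Qed.

Lemma prim_exprz_eq1 (z : algC) (e : nat) (j : int) : e.-primitive_root z ->
  (z ^ j == 1) = ((e%:Z %| j)%Z).
Proof.
move=> pz; case: j => a.
  by rewrite dvdzE /= (prim_order_dvd pz).
rewrite NegzE -invr_expz invr_eq1 dvdzE abszN.
by rewrite (prim_order_dvd pz).
Qed.

Lemma geom_root (z : algC) (e : nat) (j : int) : e.-primitive_root z ->
  \sum_(0 <= s < e) z ^ (s%:Z * j) = if (e%:Z %| j)%Z then e%:R else 0.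
Proof.
move=> pz; have e0 := prim_order_gt0 pz.
have hs : forall s : nat, z ^ (s%:Z * j) = (z ^ j) ^+ s.
  by move=> s; rewrite mulrC -exprz_exp.
under eq_bigr do rewrite hs.
rewrite -(prim_exprz_eq1 _ _ j pz) big_mkord.
case: eqP => [->|ne1]; first by rewrite (eq_bigr (fun _ => 1)) ?sumr_const ?card_ord // => i _; rewrite expr1n.
have : (z ^ j - 1) * \sum_(i < e) (z ^ j) ^+ i = 0.
  rewrite -subrX1.
  have -> : (z ^ j) ^+ e = (z ^+ e) ^ j.
    by rewrite -[(z ^ j) ^+ e]/((z ^ j) ^ (e%:Z)) exprzAC.
  rewrite prim_expr_order //.
  by rewrite exp1rz subrr.
by move/eqP; rewrite mulf_eq0 subr_eq0 => /orP[/eqP//|/eqP].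
Qed.

Lemma all_coprime (m r : nat) : (0 < m)%N ->
  coprime r m = all (fun p => ~~ (p %| r)%N) (primes m).
Proof.
move=> m0; case: (posnP r) => [->|r0].
  rewrite /coprime gcd0n; case: (ltngtP m 1) => [|m1|->] //; first by lia.
  have pm : pdiv m \in primes m by rewrite mem_primes pdiv_prime // m0 pdiv_dvd.
  apply/esym/negbTE/allPn; exists (pdiv m) => //; by rewrite dvdn0.
rewrite coprime_has_primes // -all_predC; apply: eq_in_all => p.
by rewrite mem_primes => /and3P[pp _ _] /=; rewrite mem_primes pp r0.
Qed.

Lemma L1 (m : nat) (ps : seq nat) : all (fun p => (p %| m)%N) ps ->
  exists s : seq (int * nat), all (fun cd => (cd.2 %| m)%N) s /\
   forall r : nat, (all (fun p => ~~ (p %| r)%N) ps)%:R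
     = \sum_(cd <- s) cd.1%:~R * ((cd.2 %| r)%N)%:R :> algC.
Proof.
elim: ps => [_|p ps IH /= /andP[pm hps]].
  by exists [:: (1, 1%N)]; split => [|r]; rewrite /= ?dvd1n // big_seq1 /= dvd1n mulr1.
have [s [hs e]] := IH hps.
exists (s ++ [seq (- cd.1, lcmn p cd.2) | cd <- s]); split.
  rewrite all_cat hs /= all_map; apply/allP => cd cds /=.
  by rewrite dvdn_lcm pm (allP hs cd cds).
move=> r; rewrite big_cat big_map /=.
have -> : \sum_(i <- s) (- i.1)%:~R * ((lcmn p i.2 %| r)%N)%:R
   = - ((p %| r)%N%:R * \sum_(cd <- s) cd.1%:~R * ((cd.2 %| r)%N)%:R) :> algC.
  rewrite mulr_sumr -sumrN; apply: eq_bigr => cd _.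
  rewrite dvdn_lcm mulrNz; case: (p %| r)%N; case: (cd.2 %| r)%N => /=; ring.
rewrite -e; case: (p %| r)%N => /=; rewrite ?mul0r ?mul1r ?oppr0 ?addr0 ?subrr //.
Qed.

Lemma ram (m : nat) (z : algC) : m.-primitive_root z ->
  exists s0 : seq (int * nat), all (fun ce => (0 < ce.2)%N) s0 /\ forall j : int,
  \sum_(0 <= r < m | coprime r m) z ^ (r%:Z * j)
  = \sum_(ce <- s0) ce.1%:~R * (if (ce.2%:Z %| j)%Z then ce.2%:R else 0).
Proof.
move=> pz; have m0 := prim_order_gt0 pz.
have hps : all (fun p => (p %| m)%N) (primes m).
  by apply/allP => p; rewrite mem_primes => /and3P[].
have [s [hs e]] := L1 m (primes m) hps.
exists [seq (cd.1, m %/ cd.2)%N | cd <- s]; split.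
  rewrite all_map; apply/allP => cd cds /=.
  have dm := allP hs cd cds.
  by rewrite divn_gt0 ?(dvdn_gt0 m0 dm) // dvdn_leq.
move=> j; rewrite big_map big_mkcond /=.
under eq_bigr => r _ do rewrite -mulrb (all_coprime m r m0) -mulr_natl e mulr_suml.
rewrite exchange_big /=; apply: eq_big_seq => cd cds.
have dm := allP hs cd cds; have d0 := dvdn_gt0 m0 dm.
under eq_bigr => r _ do rewrite -mulrA mulr_natl mulrb.
rewrite -mulr_sumr -big_mkcond /=; congr (_ * _).
rewrite -{1}(divnK dm) sum_mult //.
have pz' : (m %/ cd.2)%N.-primitive_root (z ^+ cd.2).
  have := dvdn_prim_root pz (dvdn_div dm).
  have -> // : (m %/ (m %/ cd.2))%N = cd.2.
  by rewrite -{1}(divnK dm) mulKn // divn_gt0 // dvdn_leq.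
rewrite -(geom_root _ _ _ pz'); apply: eq_bigr => s0 _.
rewrite -[z ^+ cd.2]/(z ^ (cd.2 : int)) exprz_exp; congr (_ ^ _); rewrite PoszM; ring.
Qed.
Section Lat.
Variables (n : nat) (i0 : 'I_n) (e : nat).
Definition dmul (i : 'I_n) : int := if i == i0 then e%:Z else 1.
Definition Asub (A : 'M[int]_n) : 'M[int]_n :=
  \matrix_(i, j) (A i j * dmul i * dmul j).
Definition scl (k : 'rV[int]_n) : 'rV[int]_n := \row_i (k 0 i * dmul i).

Lemma qf_sub A k : qf (Asub A) k = qf A (scl k).
Proof. by apply: eq_bigr => i _; apply: eq_bigr => j _; rewrite !mxE; ring. Qed.

Hypothesis e0 : (0 < e)%N.

Lemma dmul_neq0 i : dmul i != 0.
Proof. by rewrite /dmul; case: ifP => _ //; rewrite eqz_nat -lt0n. Qed.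

Lemma posdef_sub A : posdef A -> posdef (Asub A).
Proof.
move=> hA x x0.
pose x' : 'rV[Rdefinitions.R]_n := \row_i (x 0 i * (dmul i)%:~R).
have x'0 : x' != 0.
  apply: contra x0 => /eqP h; apply/eqP/rowP => i; move/rowP: h => /(_ i).
  rewrite !mxE => /eqP; rewrite mulf_eq0 intr_eq0 (negbTE (dmul_neq0 i)) orbF.
  by move/eqP.
have := hA x' x'0; congr (_ < _).
by apply: eq_bigr => i _; apply: eq_bigr => j _; rewrite !mxE !intrM; ring.
Qed.

Lemma scl_inj : injective scl.
Proof.
move=> k k' /rowP h; apply/rowP => i; move: (h i); rewrite !mxE => /eqP.
by rewrite -subr_eq0 -mulrBl mulf_eq0 (negbTE (dmul_neq0 i)) orbF subr_eq0 => /eqP.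
Qed.

Lemma theta_sub A N :
  theta_coef (Asub A) i0 1 N =
  \sum_(k \in [set k : 'rV[int]_n | qf A k = N%:Z])
     (if (e%:Z %| k 0%R i0)%Z then (1 : algC) else 0).
Proof.
rewrite /theta_coef.
transitivity (\sum_(k \in [set k : 'rV[int]_n | qf A k = N%:Z] `&`
                        [set k : 'rV[int]_n | (e%:Z %| k 0%R i0)%Z]) (1 : algC)); last first.
  by rewrite fsbig_mkcondr; apply: eq_fsbigr => k _; rewrite mem_setE.
under eq_fsbigr do rewrite exp1rz.
apply/esym/(reindex_fsbig scl) ; split.
- move=> k /= hk; split; first by rewrite -qf_sub.
  by rewrite /= mxE /dmul eqxx dvdz_mull.
- by move=> k k' _ _; apply: scl_inj.
- move=> k [/= hk hd].
  exists (\row_i (if i == i0 then (k 0%R i0 %/ e%:Z)%Z else k 0 i)).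
    by rewrite /= qf_sub; congr (qf A _ = _): hk; apply/rowP => i; rewrite !mxE /dmul; case: eqP => [->|]; rewrite ?divzK ?mulr1.
  by apply/rowP => i; rewrite !mxE /dmul; case: eqP => [->|]; rewrite ?divzK ?mulr1.
Qed.
End Lat.

Lemma core (n m : nat) (i0 : 'I_n) (A : 'M[int]_n) (hA : posdef A) (z : algC) :
  m.-primitive_root z ->
  (forall r : nat, coprime r m -> forall N : nat,
     theta_coef A i0 (z ^+ r) N = theta_coef A i0 z N) ->
  exists s : seq (rat * 'M[int]_n),
    (forall p, p \in s -> posdef p.2) /\
    forall N : nat,
      theta_coef A i0 z N
      = \sum_(p <- s) ratr p.1 * theta_coef p.2 i0 1 N.
Proof.
move=> pz hyp; have m0 := prim_order_gt0 pz.
have [s0 [hs0 hR]] := ram m z pz.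
exists [seq (((ce.1 * ce.2%:Z)%:~R / (totient m)%:R : rat), Asub n i0 ce.2 A) | ce <- s0].
split.
  move=> p /mapP [ce ces ->] /=; apply: posdef_sub => //.
  exact: (allP hs0 ce ces).
move=> N.
set S := [set k : 'rV[int]_n | qf A k = N%:Z].
have Sfin : finite_set S := qf_finite n A hA N%:Z.
have tE : theta_coef A i0 z N = (totient m)%:R^-1 *
    \sum_(0 <= r < m | coprime r m) theta_coef A i0 (z ^+ r) N.
  rewrite (eq_bigr (fun _ => theta_coef A i0 z N)); last by move=> r /hyp ->.
  rewrite big_mkcond /=; under eq_bigr do rewrite -mulrb.
  rewrite sumrMnr -mulr_natr.
  have -> : \sum_(0 <= i < m) (coprime i m : nat) = totient m.
    by rewrite totient_count_coprime; apply: eq_bigr => i _; rewrite coprime_sym.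
  by rewrite mul1r -[theta_coef A i0 z N *+ totient m]mulr_natl mulrA mulVf ?mul1r // pnatr_eq0 -lt0n totient_gt0.
rewrite tE big_map /=.
rewrite (eq_bigr (fun r : nat => \sum_(k <- finmap.enum_fset (fset_set S)) z ^ (r%:Z * k 0%R i0))); last first.
  move=> r _; rewrite /theta_coef (fsbig_finite _ _ Sfin); apply: eq_bigr => k _.
  by rewrite -exprz_exp.
rewrite exchange_big /=.
under eq_bigr do rewrite hR.
rewrite exchange_big /= mulr_sumr; apply: eq_big_seq => ce ces.
have e0 : (0 < ce.2)%N := allP hs0 ce ces.
rewrite theta_sub // (fsbig_finite _ _ Sfin) !mulr_sumr; apply: eq_bigr => k _.
rewrite fmorph_div rmorph_int rmorph_nat /= intrM.
case: ifP => _; rewrite ?mulr0 //; ring.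
Qed.

Theorem proposition3p2 (n m : nat) (hn : (0 < n)%N) (hm : (0 < m)%N)
  (A : 'M[int]_n) (hA : posdef A) :
  (forall (g : {rmorphism algC -> algC}) (N : nat),
      theta_coef A (Ordinal hn) (g (xi m)) N = theta_coef A (Ordinal hn) (xi m) N) ->
  exists s : seq (rat * 'M[int]_n),
    (forall p, p \in s -> posdef p.2) /\
    forall N : nat,
      theta_coef A (Ordinal hn) (xi m) N
      = \sum_(p <- s) ratr p.1 * theta_coef p.2 (Ordinal hn) 1 N.
Proof.
move=> hyp.
have x1 : xi m ^+ m = 1 by rewrite /xi exprAC rootCK // sqrrN expr1n.
have [m' pz _] := prim_order_exists hm x1.
apply: (core _ m' _ _ hA) => // r cop N.
have [u hu] := Qn_aut_exists cop.
by rewrite -(hu (xi m) (prim_expr_order pz)) hyp.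
Qed.
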